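(* Let $n\ge1$, $q$ an indeterminate, $\mathcal F^n$ the Fock space with basis $|\lambda\rangle$ and dual basis $\langle\lambda|$ described in the context, with $z=1$, $Q^+(v)=\sum_r v^rQ^+_r$ the $Q^+$-operator, and $\tilde\beta_j(v)=Q^+(v)\beta_jQ^+(v)^{-1}=\sum_{b\ge0}v^b\tilde\beta_{j,b}$, $\tilde\beta^*_j(v)=Q^+(v)\beta^*_jQ^+(v)^{-1}=\sum_{b\ge0}v^b\tilde\beta^*_{j,b}$. Then for all $r\ge0$, all $j\in\{1,\dots,n\}$ and all partitions $\lambda,\mu$ with at most $n$ parts, $$\sum_{a+b=r}\sum_{\rho}(-1)^aN^{\tilde\rho}_{(a)\tilde\mu}(q)\,\langle\lambda|\tilde\beta_{j,b}|\rho\rangle=(-1)^r\,N^{\tilde\lambda}_{(r)\widetilde{\beta_j\mu}}(q),$$ $$\sum_{a+b=r}\sum_{\rho}\frac{(-1)^aN^{\tilde\rho}_{(a)\tilde\mu}(q)}{1-q^{2m_j(\mu)+2}}\,\langle\lambda|\tilde\beta^*_{j,b}|\rho\rangle=(-1)^r\,N^{\tilde\lambda}_{(r)\widetilde{\beta^*_j\mu}}(q),$$ where $\rho$ ranges over partitions with at most $n$ parts.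
   Context: $(q^2)_m:=\prod_{i=1}^m(1-q^{2i})$. $\mathcal F^n$: $\mathbb C(q)$-vector space with basis $|\lambda\rangle$, $\lambda$ partitions with at most $n$ parts; $m_j(\lambda)=\lambda_j-\lambda_{j+1}$ ($\lambda_{n+1}=0$) is the multiplicity of columns of height $j$ in the Young diagram of $\lambda$. $\langle\lambda|$ is the dual basis. Operators: $\beta_j^*|\lambda\rangle=(1-q^{2m_j(\lambda)+2})|\beta_j^*\lambda\rangle$, $\beta_j|\lambda\rangle=|\beta_j\lambda\rangle$ (zero if $m_j(\lambda)=0$), $q^{N_j}|\lambda\rangle=q^{m_j(\lambda)}|\lambda\rangle$, where $\beta_j^*\lambda$ (resp. $\beta_j\lambda$) denotes the partition obtained by inserting (resp. deleting) a column of height $j$ in the Young diagram. $Q^+(v)=\sum_r v^rQ^+_r$ with $Q^+_r=(-1)^r\sum_{\alpha}z^{\alpha_n}\frac{(\beta_1^* )^{\alpha_n}(\beta_1\beta_2^* )^{\alpha_1}\cdots(\beta_{n-1}\beta_n^* )^{\alpha_{n-1}}\beta_n^{\alpha_n}}{(q^2)_{\alpha_1}\cdots(q^2)_{\alpha_n}}$, the sum over compositions $\alpha\in\mathbb Z^n_{\ge0}$ of $r$, with $z=1$; $Q^+_0=1$ so $Q^+(v)$ is invertible as a power series in $v$. For a partition $\mu$, $\tilde\mu$ denotes $\mu$ with all columns of height $n$ removed. The (2D TQFT) fusion coefficients appearing here are $N^{\tilde\rho}_{(a)\tilde\mu}(q)=(-1)^a\langle\rho|Q^+_a|\mu\rangle$.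 If $\mu$ has no column of height $j$, $N^{\tilde\lambda}_{(r)\widetilde{\beta_j\mu}}$ is read as $0$. *)

(* Defs.v *)
From HB Require Import structures.
From mathcomp Require Import all_boot all_order all_algebra.
From mathcomp Require Import reals complex.
Set Implicit Arguments. Unset Strict Implicit. Unset Printing Implicit Defensive.
Import Order.TTheory GRing.Theory Num.Theory.
Local Open Scope ring_scope.

Definition Cq (R : realType) := {fraction {poly R[i]}}.
Definition qq (R : realType) : Cq R := tofrac 'X.

Section Fock.
Variables (R : realType) (n : nat).
Local Notation K := (Cq R).
Local Notation q := (qq R).

(* Basis of F^n.  A partition lambda with at most n parts is encoded by    *)
(* its column multiplicities (m_1(lambda),...,m_n(lambda)),               *)
(* m_j = lambda_j - lambda_{j+1}; this is a bijection between partitions  *)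
(* with at most n parts and N^n (lambda_i = sum_{j>=i} m_j).  The         *)
(* component i : 'I_n stores m_{i+1}.                                     *)
Definition part := {ffun 'I_n -> nat}.

(* m_j(lambda) for a 1-based height j (0 if j is out of range). *)
Definition mult (lam : part) (j : nat) : nat :=
  if @insub nat (fun k => k < n)%N _ j.-1 is Some i then lam i else 0%N.
Definition setmult (lam : part) (j k : nat) : part :=
  [ffun i : 'I_n => if (i : nat) == j.-1 then k else lam i].
Definition ins_col (j : nat) (lam : part) : part := setmult lam j (mult lam j).+1.
(* beta_j lambda : delete one column of height j (meaningful if m_j > 0). *)
Definition del_col (j : nat) (lam : part) : part := setmult lam j (mult lam j).-1.

(* Vectors of F^n: finite formal linear combinations sum c |lambda>.       *)
Definition vec := seq (K * part).
Definition coef (lam : part) (v : vec) : K := \sum_(p <- v | p.2 == lam) p.1.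
Definition op := part -> vec.
Definition apply (T : op) (v : vec) : vec :=
  flatten [seq [seq (p.1 * d.1, d.2) | d <- T p.2] | p <- v].
Definition id_op : op := fun lam => [:: (1, lam)].
Definition comp (T S : op) : op := fun lam => apply T (S lam).
Definition scale (c : K) (T : op) : op :=
  fun lam => [seq (c * d.1, d.2) | d <- T lam].
Definition opsum (l : seq op) : op := fun lam => flatten [seq T lam | T <- l].
Definition iter_op (k : nat) (T : op) : op := iter k (comp T) id_op.
Definition melt (lam : part) (T : op) (mu : part) : K := coef lam (T mu).

Definition beta_star (j : nat) : op :=
  fun lam => [:: (1 - q ^+ (2 * mult lam j + 2)%N, ins_col j lam)].
Definition beta (j : nat) : op :=
  fun lam => if mult lam j == 0%N then [::] else [:: (1, del_col j lam)].

Definition qpoch (m : nat) : K := \prod_(i < m) (1 - q ^+ (2 * i.+1)%N).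

(* For alpha : 'I_n -> nat, alpha_i (1-based). *)
Definition comp_at (r : nat) (al : {ffun 'I_n -> 'I_r.+1}) (i : nat) : nat :=
  if @insub nat (fun k => k < n)%N _ i.-1 is Some k then (al k : nat) else 0%N.

(* [beta_1-star]^{alpha_n} [beta_1 beta_2-star]^{alpha_1} ...
   [beta_{n-1} beta_n-star]^{alpha_{n-1}} beta_n^{alpha_n}, rightmost applied first *)
Definition Qterm (r : nat) (al : {ffun 'I_n -> 'I_r.+1}) : op :=
  comp (iter_op (comp_at al n) (beta_star 1))
    (comp (foldr (fun i acc =>
                    comp (iter_op (comp_at al i) (comp (beta i) (beta_star i.+1))) acc)
                 id_op (iota 1 n.-1))
          (iter_op (comp_at al n) (beta n))).

Definition compositions (r : nat) : seq {ffun 'I_n -> 'I_r.+1} :=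
  [seq al : {ffun 'I_n -> 'I_r.+1} <- enum {ffun 'I_n -> 'I_r.+1} | (\sum_(i < n) (al i : nat) == r)%N].

(* Q^+_r (with z = 1, so z^{alpha_n} = 1) *)
Definition Qplus (r : nat) : op :=
  scale ((-1) ^+ r)
    (opsum [seq scale (\prod_(i < n) qpoch (al i))^-1 (Qterm al)
           | al : {ffun 'I_n -> 'I_r.+1} <- compositions r]).

(* Coefficients of the inverse power series Q^+(v)^{-1} = sum_c v^c P_c:
   P_0 = 1, P_c = - sum_{k=1}^c Q^+_k P_{c-k}.
   Qinv_list c = [:: P_c; P_{c-1}; ...; P_0]. *)
Fixpoint Qinv_list (c : nat) : seq op :=
  match c with
  | 0 => [:: id_op]
  | c'.+1 => let l := Qinv_list c' in
      scale (-1) (opsum [seq comp (Qplus k.+1) (nth id_op l k) | k <- iota 0 c'.+1]) :: l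
  end.
Definition Qinv (c : nat) : op := head id_op (Qinv_list c).

(* Coefficient of v^b in Q^+(v) T Q^+(v)^{-1}. *)
Definition conj_coef (T : op) (b : nat) : op :=
  opsum [seq comp (Qplus a) (comp T (Qinv (b - a)%N)) | a <- iota 0 b.+1].
Definition beta_tilde (j b : nat) : op := conj_coef (beta j) b.
Definition beta_star_tilde (j b : nat) : op := conj_coef (beta_star j) b.

Definition Nfus (a : nat) (rho mu : part) : K := (-1) ^+ a * melt rho (Qplus a) mu.

(* "sum_{a=0}^r sum_rho F a rho = s", where rho ranges over all partitions
   with at most n parts: the double sum is finitely supported, and its
   value (the sum over any duplicate-free finite list containing the
   support) is s. *)
Definition fin_double_sum (r : nat) (F : nat -> part -> K) (s : K) : Prop :=
  (exists S : seq part, forall a rho, (a <= r)%N -> F a rho != 0 -> rho \in S) /\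
  (forall S : seq part, uniq S ->
     (forall a rho, (a <= r)%N -> F a rho != 0 -> rho \in S) ->
     \sum_(a < r.+1) \sum_(rho <- S) F a rho = s).

End Fock.

(* Main.v *)
Require Import Defs.
From HB Require Import structures.
From mathcomp Require Import all_boot all_order all_algebra.
From mathcomp Require Import reals complex.
Set Implicit Arguments. Unset Strict Implicit. Unset Printing Implicit Defensive.
Import Order.TTheory GRing.Theory Num.Theory.
Local Open Scope ring_scope.

Section Proof.
Variables (R : realType) (n : nat).
Local Notation K := (Cq R).
Local Notation part := (part n).
Local Notation vec := (vec R n).
Local Notation op := (op R n).
Local Notation Q := (@Qplus R n).
Local Notation P := (@Qinv R n).
Local Notation id1 := (@id_op R n).

Definition E (v : vec) (g : part -> K) : K := \sum_(p <- v) p.1 * g p.2.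

Lemma E_nil g : E [::] g = 0. Proof. by rewrite /E big_nil. Qed.
Lemma E_cons p v g : E (p :: v) g = p.1 * g p.2 + E v g. Proof. by rewrite /E big_cons. Qed.
Lemma E_cat v w g : E (v ++ w) g = E v g + E w g. Proof. by rewrite /E big_cat. Qed.
Lemma E_ext v g g' : (forall y, g y = g' y) -> E v g = E v g'.
Proof. by move=> H; apply: eq_bigr => p _; rewrite H. Qed.
Lemma E_0 v : E v (fun _ => 0) = 0.
Proof. by rewrite /E big1 // => p _; rewrite mulr0. Qed.
Lemma E_scalemap c v g : E [seq (c * d.1, d.2) | d <- v] g = c * E v g.
Proof. rewrite /E big_map big_distrr /=; apply: eq_bigr => p _; by rewrite mulrA. Qed.
Lemma E_sum (I : Type) (s : seq I) (Pr : pred I) v (h : I -> part -> K) :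
  E v (fun y => \sum_(i <- s | Pr i) h i y) = \sum_(i <- s | Pr i) E v (h i).
Proof.
rewrite /E; under eq_bigr do rewrite big_distrr.
exact: exchange_big.
Qed.
Lemma E_scale v c g : E v (fun y => c * g y) = c * E v g.
Proof. rewrite /E big_distrr; apply: eq_bigr => p _ /=; by rewrite mulrCA. Qed.
Lemma E_flatten (l : seq vec) g : E (flatten l) g = \sum_(v <- l) E v g.
Proof. elim: l => [|v l IH]; first by rewrite big_nil E_nil. by rewrite /= E_cat IH big_cons. Qed.
Lemma E_apply (T : op) v g : E (apply T v) g = E v (fun y => E (T y) g).
Proof.
elim: v => [|p v IH]; first by rewrite /apply /= !E_nil.
by rewrite /apply /= E_cat E_scalemap -/(apply T v) IH E_cons.
Qed.
Lemma E_id x g : E (id1 x) g = g x.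
Proof. by rewrite /id_op E_cons E_nil mul1r addr0. Qed.
Lemma E_comp (A B : op) x g : E (Defs.comp A B x) g = E (B x) (fun y => E (A y) g).
Proof. by rewrite /Defs.comp E_apply. Qed.
Lemma E_scaleop c (A : op) x g : E (Defs.scale c A x) g = c * E (A x) g.
Proof. by rewrite /Defs.scale E_scalemap. Qed.
Lemma E_opsum (l : seq op) x g : E (opsum l x) g = \sum_(T <- l) E (T x) g.
Proof. by rewrite /opsum E_flatten big_map. Qed.
Lemma coefE lam v : coef lam v = E v (fun y => if y == lam then 1 else 0).
Proof.
rewrite /coef /E big_mkcond /=; apply: eq_bigr => p _.
by case: eqP => _; rewrite ?mulr1 ?mulr0.
Qed.
Lemma sum_iota0 (m : nat) (F : nat -> K) : \sum_(a <- iota 0 m) F a = \sum_(a < m) F a.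
Proof. by rewrite -(big_mkord xpredT) /index_iota subn0. Qed.

Lemma Qinv_listS c : Qinv_list R n c.+1 = P c.+1 :: Qinv_list R n c.
Proof. by []. Qed.
Lemma Qinv_list_nth c k : (k <= c)%N -> nth id1 (Qinv_list R n c) k = P (c - k).
Proof.
elim: c k => [|c IH] [|k] //= Hk.
by rewrite IH.
Qed.
Lemma P0 : P 0 = id1. Proof. by []. Qed.
Lemma P_Sdef c : P c.+1 = Defs.scale (-1) (opsum [seq Defs.comp (Q k.+1) (nth id1 (Qinv_list R n c) k) | k <- iota 0 c.+1]).
Proof. by []. Qed.
Lemma P_S c x g : E (P c.+1 x) g =
  - \sum_(k < c.+1) E (P (c - k) x) (fun y => E (Q k.+1 y) g).
Proof.
rewrite P_Sdef E_scaleop E_opsum big_map sum_iota0 mulN1r.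
congr (- _); apply: eq_bigr => k _; rewrite E_comp Qinv_list_nth //.
by rewrite -ltnS.
Qed.

Lemma E_foldr0 (s : seq nat) (h : nat -> nat) (X : nat -> op) x g :
  (forall i, h i = 0%N) ->
  E (foldr (fun i acc => Defs.comp (iter_op (h i) (X i)) acc) id1 s x) g = g x.
Proof.
move=> H; elim: s x g => [|i s IH] x g /=; first exact: E_id.
rewrite E_comp (@E_ext _ _ g); first exact: IH.
by move=> y; rewrite H E_id.
Qed.

Lemma iter0 (T : op) : iter_op 0 T = id1. Proof. by []. Qed.
Lemma E_comp_idl (A : op) x g : E (Defs.comp id1 A x) g = E (A x) g.
Proof. by rewrite E_comp; apply: E_ext => y; rewrite E_id. Qed.
Lemma E_comp_idr (A : op) x g : E (Defs.comp A id1 x) g = E (A x) g.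
Proof. by rewrite E_comp E_id. Qed.

Lemma Q0 x g : E (Q 0 x) g = g x.
Proof.
have [al0 Hal0] : exists al0, enum {ffun 'I_n -> 'I_1} = [:: al0].
  have : size (enum {ffun 'I_n -> 'I_1}) = 1%N.
    by rewrite -cardE card_ffun card_ord exp1n.
  by case: (enum _) => [|a [|]] // _; exists a.
have Hv : forall i, (al0 i : nat) = 0%N by move=> i; case: (al0 i) => -[].
have Hc : compositions n 0 = [:: al0].
  rewrite /compositions Hal0 /= big1 //.
have Hca : forall i, comp_at al0 i = 0%N.
  by move=> i; rewrite /comp_at; case: insub => // k; rewrite Hv.
rewrite /Qplus Hc E_scaleop expr0 mul1r E_opsum big_cons big_nil addr0 E_scaleop.
rewrite big1 ?invr1 ?mul1r; last by move=> i _; rewrite Hv /qpoch big_ord0.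
rewrite /Qterm !Hca !iter0 E_comp_idl E_comp_idr; exact: E_foldr0.
Qed.

Lemma tri_widen (r : nat) (F : nat -> nat -> K) :
  \sum_(a < r.+1) \sum_(b < (r - a).+1) F a b =
  \sum_(a < r.+1) \sum_(b < r.+1) (if (a + b <= r)%N then F a b else 0).
Proof.
apply: eq_bigr => a _; rewrite (big_ord_widen r.+1); last by rewrite ltnS leq_subr.
rewrite big_mkcond; apply: eq_bigr => b _.
by rewrite ltnS leq_subRL // -ltnS.
Qed.

Lemma tri_exchange (r : nat) (F : nat -> nat -> K) :
  \sum_(a < r.+1) \sum_(b < (r - a).+1) F a b =
  \sum_(b < r.+1) \sum_(a < (r - b).+1) F a b.
Proof.
rewrite tri_widen (tri_widen r (fun b a => F a b)) exchange_big /=.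
by apply: eq_bigr => b _; apply: eq_bigr => a _; rewrite addnC.
Qed.

Lemma sum_last (r : nat) (F : nat -> K) :
  \sum_(a < r.+1) (match (r - a)%N with 0 => F a | _.+1 => 0 end) = F r.
Proof.
rewrite big_ord_recr /= subnn big1 ?add0r // => i _.
have : (0 < r - i)%N by rewrite subn_gt0.
by case: (r - i)%N.
Qed.

Lemma E_if v m G : E v (fun rho => match m with 0 => G rho | _.+1 => 0 end)
  = match m with 0 => E v G | _.+1 => 0 end.
Proof. by case: m => [|m]; [apply: E_ext | exact: E_0]. Qed.

Lemma RI k x G : \sum_(a < k.+1) E (P (k - a) x) (fun rho => E (Q a rho) G) =
  match k with 0 => G x | _.+1 => 0 end.
Proof.
case: k => [|c].
  by rewrite big_ord1 subnn P0 E_id Q0.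
rewrite big_ord_recl subn0 (@E_ext _ _ G); last by move=> y; rewrite Q0.
rewrite P_S addrC.
rewrite (eq_bigr (fun i : 'I_c.+1 => E (P (c - i) x) (fun y => E (Q i.+1 y) G))).
  by rewrite subrr.
by move=> i _; rewrite lift0 subSS.
Qed.

Definition L k x (G : part -> K) :=
  \sum_(a < k.+1) E (Q a x) (fun rho => E (P (k - a) rho) G).

Lemma L_ext k x G G' : (forall y, G y = G' y) -> L k x G = L k x G'.
Proof.
move=> H; apply: eq_bigr => a _; apply: E_ext => y; exact: E_ext.
Qed.

Lemma mixed k x G :
  \sum_(a < k.+1) L (k - a) x (fun s => E (Q a s) G) = E (Q k x) G.
Proof.
transitivity (\sum_(d < k.+1) E (Q d x)
   (fun rho => match (k - d)%N with 0 => G rho | _.+1 => 0 end)); last first.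
  under eq_bigr do rewrite E_if.

  exact: (sum_last k (fun d => E (Q d x) G)).
under [RHS]eq_bigr => d _ do rewrite -(E_ext _ (RI (k - d) ^~ G)).
under [RHS]eq_bigr => d _ do rewrite E_sum.
rewrite /L; etransitivity; first exact: (tri_exchange k (fun a d => E (Q d x) (fun rho => E (P (k - a - d) rho) (fun s => E (Q a s) G)))).
apply: eq_bigr => a _; apply: eq_bigr => d _.
by apply: E_ext => rho; rewrite subnAC.
Qed.

Lemma LI k x G : L k x G = match k with 0 => G x | _.+1 => 0 end.
Proof.
elim/ltn_ind: k x G => -[|c] IH x G.
  rewrite /L big_ord1 subnn P0 (@E_ext _ _ G); first exact: Q0.
  by move=> y; rewrite E_id.
have Hm := mixed c.+1 x G.
rewrite big_ord_recl subn0 (@L_ext _ _ _ G) in Hm; last by move=> y; rewrite Q0.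
rewrite (eq_bigr (fun i : 'I_c.+1 => match (c - i)%N with 0 => E (Q i.+1 x) G | _.+1 => 0 end)) in Hm; last first.
  by move=> i _; rewrite lift0 subSS IH // ltnS leq_subr.
have := sum_last c (fun i => E (Q i.+1 x) G); rewrite /= => Hs.
rewrite Hs in Hm.
apply: (@addIr _ (E (Q c.+1 x) G)); rewrite add0r; exact: Hm.
Qed.

Lemma E_conj (T : op) b rho g : E (conj_coef T b rho) g =
  \sum_(a < b.+1) E (P (b - a) rho) (fun z => E (T z) (fun y => E (Q a y) g)).
Proof.
rewrite /conj_coef E_opsum big_map sum_iota0; apply: eq_bigr => a _.
by rewrite !E_comp.
Qed.

Lemma MAIN (T : op) r x g :
  \sum_(a < r.+1) E (Q a x) (fun rho => E (conj_coef T (r - a) rho) g)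
  = E (T x) (fun y => E (Q r y) g).
Proof.
under eq_bigr => a _ do rewrite (E_ext _ (E_conj T (r - a) ^~ g)) E_sum.
etransitivity; first exact: (tri_exchange r (fun a a' => E (Q a x) (fun rho => E (P (r - a - a') rho) (fun z => E (T z) (fun y => E (Q a' y) g))))).
transitivity (\sum_(a' < r.+1) L (r - a') x (fun z => E (T z) (fun y => E (Q a' y) g))).
  apply: eq_bigr => a' _; apply: eq_bigr => a _; apply: E_ext => rho.
  by rewrite subnAC.
under eq_bigr do rewrite LI.
exact: (sum_last r (fun a' => E (T x) (fun y => E (Q a' y) g))).
Qed.

Lemma sum_delta (U : seq part) (x : part) (c : K) : uniq U -> x \in U ->
  \sum_(y <- U) (if x == y then c else 0) = c.
Proof.
elim: U => [|y U IH] //= /andP [yU UU]; rewrite in_cons big_cons.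
case: eqP => [e _|_ /= xU]; last by rewrite add0r IH.
rewrite big1_seq ?addr0 // => z /andP [_ zU].
case: eqP => // e'; rewrite -e' in zU.
by rewrite e in zU; rewrite zU in yU.

Qed.

Lemma group (v : vec) (f : part -> K) (S : seq part) : uniq S ->
  (forall rho, coef rho v * f rho != 0 -> rho \in S) ->
  \sum_(rho <- S) coef rho v * f rho = E v f.
Proof.
move=> US HS.
have key : forall U, uniq U -> (forall p, p \in v -> p.2 \in U) ->
    \sum_(rho <- U) coef rho v * f rho = E v f.
  move=> U UU HU.
  transitivity (\sum_(rho <- U) \sum_(p <- v) (if p.2 == rho then p.1 * f p.2 else 0)).
    apply: eq_bigr => rho _; rewrite /coef big_distrl /= big_mkcond /=.
    apply: eq_bigr => p _.
    by case: eqP => [->|_]; rewrite ?mul0r.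
  rewrite exchange_big /E; apply: eq_big_seq => p Hp.
  by rewrite sum_delta // HU.
set U2 := [seq x <- undup (map snd v) | x \notin S].
rewrite -(key (S ++ U2)).
- rewrite big_cat /= [X in _ = _ + X]big1_seq ?addr0 // => x /andP [_].
  rewrite mem_filter => /andP [xS _].
  by apply/eqP; apply: contraNT xS; exact: HS.
- rewrite cat_uniq US filter_uniq ?undup_uniq // andbT /=.
  by apply/hasPn => x; rewrite mem_filter => /andP [].
- move=> p pv; rewrite mem_cat; case pS: (p.2 \in S) => //=.
  by rewrite mem_filter pS mem_undup map_f.
Qed.

Lemma supp (v : vec) rho : coef rho v != 0 -> rho \in map snd v.
Proof.
apply: contraR => H; rewrite /coef big1_seq // => p /andP [/eqP e Hp].
by case/negP: H; rewrite -e; exact: map_f.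
Qed.

Lemma cnz m : (0 < m)%N -> 1 - qq R ^+ m != 0.
Proof.
move=> m0; have -> : 1 - qq R ^+ m = tofrac (1 - 'X^m : {poly R[i]}).
  by rewrite rmorphB rmorph1 rmorphXn.
rewrite tofrac_eq0 subr_eq0.
apply/eqP => /(congr1 (fun p : {poly R[i]} => size p)).
by rewrite size_poly1 size_polyXn; case: m m0.
Qed.

Lemma lnz (x y : K) : x * y != 0 -> x != 0.
Proof. by apply: contraNneq => ->; rewrite mul0r. Qed.

Lemma MAINm (T : op) r x lam :
  \sum_(a < r.+1) E (Q a x) (fun rho => melt lam (conj_coef T (r - a)) rho)
  = E (T x) (fun y => melt lam (Q r) y).
Proof.
transitivity (\sum_(a < r.+1) E (Q a x) (fun rho => E (conj_coef T (r - a) rho) (fun y => if y == lam then 1 else 0))).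
  by apply: eq_bigr => a _; apply: E_ext => rho; rewrite /melt coefE.
rewrite MAIN; apply: E_ext => y; by rewrite /melt coefE.
Qed.
End Proof.

Theorem mainTheorem2 (R : realType) (n : nat) (hn : (1 <= n)%N)
  (r j : nat) (hj : (1 <= j <= n)%N) (lam mu : part n) :
  fin_double_sum r
    (fun a rho => (-1) ^+ a * Nfus R a rho mu * melt lam (beta_tilde R j (r - a)%N) rho)
    ((-1) ^+ r * (if mult mu j == 0%N then 0 else Nfus R r lam (del_col j mu)))
  /\
  fin_double_sum r
    (fun a rho => (-1) ^+ a * Nfus R a rho mu / (1 - qq R ^+ (2 * mult mu j + 2)%N)
                  * melt lam (beta_star_tilde R j (r - a)%N) rho)
    ((-1) ^+ r * Nfus R r lam (ins_col j mu)).
Proof.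
have sgn : forall a (x : Cq R), (-1) ^+ a * ((-1) ^+ a * x) = x.
  by move=> a x; rewrite mulrA -exprMn mulrNN mulr1 expr1n mul1r.
have cn0 : 1 - qq R ^+ (2 * mult mu j + 2)%N != 0 by apply: cnz; rewrite addn2.
have NS : forall a (rho nu : part n), (-1) ^+ a * Nfus R a rho nu = coef rho (Qplus R a nu).
  by move=> a rho nu; rewrite /Nfus sgn.
set c := 1 - qq R ^+ (2 * mult mu j + 2)%N in cn0 *.
have Hsupp : forall (F : nat -> part n -> Cq R),
    (forall a rho, F a rho != 0 -> coef rho (Qplus R a mu) != 0) ->
    exists S : seq (part n), forall a rho, (a <= r)%N -> F a rho != 0 -> rho \in S.
  move=> F HF; exists (flatten [seq map snd (Qplus R a mu) | a <- iota 0 r.+1]).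
  move=> a rho ar Fn; apply/flattenP; exists (map snd (Qplus R a mu)).
    by apply/mapP; exists a => //; rewrite mem_iota leq0n add0n ltnS ar.
  exact: supp (HF _ _ Fn).
split; split.
- apply: Hsupp => a rho; rewrite (NS a rho mu); exact: lnz.
- move=> S US HS.
  transitivity (\sum_(a < r.+1) E (Qplus R a mu)
     (fun rho => melt lam (beta_tilde R j (r - a)) rho)).
    apply: eq_bigr => a _.
    rewrite -(@group _ _ (Qplus R a mu) (fun rho => melt lam (beta_tilde R j (r - a)) rho) _ US); last first.
      move=> rho H; apply: (HS a rho); first by rewrite -ltnS.
      by rewrite (NS a rho mu).
    apply: eq_bigr => rho _.
    congr (_ * _); exact: NS.
  etransitivity; first exact: (MAINm (beta R j) r mu lam).
  rewrite /beta; case: (mult mu j == 0%N).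
    by rewrite E_nil mulr0.
  by rewrite E_cons E_nil addr0 mul1r (NS r lam (del_col j mu)).
- apply: Hsupp => a rho; rewrite (NS a rho mu) => H; apply: lnz (lnz H).
- move=> S US HS.
  transitivity (\sum_(a < r.+1) c^-1 * E (Qplus R a mu)
     (fun rho => melt lam (beta_star_tilde R j (r - a)) rho)).
    apply: eq_bigr => a _.
    rewrite -E_scale.
    rewrite -(@group _ _ (Qplus R a mu) (fun rho => c^-1 * melt lam (beta_star_tilde R j (r - a)) rho) _ US); last first.
      move=> rho H; apply: (HS a rho); first by rewrite -ltnS.
      by rewrite (NS a rho mu) -mulrA.
    apply: eq_bigr => rho _.
    by rewrite (NS a rho mu) -mulrA.
  rewrite -big_distrr /=.
  rewrite (_ : \sum_(a < r.+1) _ = E (beta_star R j mu) (fun y => melt lam (Qplus R r) y)); last first.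
    exact: (MAINm (beta_star R j) r mu lam).
  rewrite /beta_star E_cons E_nil addr0 /=.
  by rewrite mulKf // (NS r lam (ins_col j mu)).
Qed.
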